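(* Let $A$ be a finite alphabet, $E\subseteq W(A)$ and $\vec s=(s_n(x))_{n=0}^\infty\in V^\infty(A)$ such that $E$ is large in $\vec s$. Then there exist $m\ge 1$, a variable word $w(x)\in\langle (s_n(x))_{n=0}^{m-1}\rangle_v$ and $\vec t\in V^\infty(A)$ with $\vec t\le (s_{m+n}(x))_{n=0}^\infty$ such that, setting $F=\{w(a):a\in A\}$, the set $E\cap E_F$ is large in $\vec t$.
   Context: $\mathbb N=\{0,1,2,\dots\}$. Let $A$ be a finite nonempty alphabet. $W(A)$ denotes the set of all finite words over $A$, including the empty word; words are concatenated by juxtaposition. Fix a symbol $x\notin A$. A variable word over $A$ is a finite word over $A\cup\{x\}$ in which $x$ occurs at least once; $V(A)$ is the set of variable words. For $s(x)\in V(A)$ and $a\in A\cup\{x\}$, $s(a)$ is obtained by replacing every occurrence of $x$ by $a$. $V^\infty(A)$ is the set of infinite sequences of variable words. For a sequence $(s_n(x))_{n\in I}$ of variable words indexed by a set $I\subseteq\mathbb N$ that is either a finite interval or of the form $\{m,m+1,\dots\}$: the constant span $\langle (s_n(x))_{n\in I}\rangle_c$ is the set of all words $s_{l_0}(a_0)s_{l_1}(a_1)\cdots s_{l_j}(a_j)$ with $j\ge 0$, $l_0<\dots<l_j$ in $I$ and $a_0,\dots,a_j\in A$; the variable span $\langle (s_n(x))_{n\in I}\rangle_v$ is the set of all words $s_{l_0}(a_0)\cdots s_{l_j}(a_j)$ with $j\ge0$, $l_0<\dots<l_j$ in $I$, $a_0,\dots,a_j\in A\cup\{x\}$ and at least one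 $a_i=x$. Extracted subsequences: let $\vec s=(s_n(x))_{n=0}^\infty\in V^\infty(A)$. A finite sequence $(t_n(x))_{n=0}^l$ of variable words is an extracted subsequence of $\vec s$ if there exist integers $0=m_0<m_1<\dots<m_{l+1}$ with $t_i(x)\in\langle (s_n(x))_{n=m_i}^{m_{i+1}-1}\rangle_v$ for all $0\le i\le l$. An infinite sequence $\vec t=(t_n(x))_{n=0}^\infty$ is an extracted subsequence of $\vec s$ if every initial segment $(t_n(x))_{n=0}^l$ is a finite extracted subsequence of $\vec s$. We write $\vec t\le\vec s$. A set $E\subseteq W(A)$ is large in $\vec s\in V^\infty(A)$ if $E\cap\langle\vec w\rangle_c\neq\emptyset$ for every infinite extracted subsequence $\vec w$ of $\vec s$. For $E\subseteq W(A)$ and nonempty $F\subseteq W(A)$, $E_F=\{z\in W(A): wz\in E\text{ for every }w\in F\}$. *)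

(* Defs.v *)
From mathcomp Require Import all_boot.
Set Implicit Arguments. Unset Strict Implicit. Unset Printing Implicit Defensive.

(* Words over A: seq A.  Letters of A ∪ {x}: option A, with None = x.
   Variable words: seq (option A) containing None. *)
Definition word (A : finType) := seq A.
Definition vword (A : finType) := seq (option A).

Definition is_vword (A : finType) (s : vword A) : bool := None \in s.

Definition subst_c (A : finType) (s : vword A) (a : A) : word A :=
  map (fun c => odflt a c) s.

Definition subst_v (A : finType) (s : vword A) (a : option A) : vword A :=
  map (fun c => if c is Some b then Some b else a) s.

Definition cspan (A : finType) (s : nat -> vword A) (I : pred nat) (z : word A) : Prop :=
  exists ls : seq (nat * A),
    [/\ ls != [::], sorted ltn (map fst ls), all I (map fst ls) &
        z = flatten [seq subst_c (s p.1) p.2 | p <- ls]].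

Definition vspan (A : finType) (s : nat -> vword A) (I : pred nat) (z : vword A) : Prop :=
  exists ls : seq (nat * option A),
    [/\ ls != [::], sorted ltn (map fst ls), all I (map fst ls),
        has (fun p => p.2 == None) ls &
        z = flatten [seq subst_v (s p.1) p.2 | p <- ls]].

Definition extracted_fin (A : finType) (t : nat -> vword A) (l : nat)
    (s : nat -> vword A) : Prop :=
  exists m : nat -> nat,
    m 0 = 0 /\
    forall i, i <= l ->
      m i < m i.+1 /\ vspan s (fun n => (m i <= n) && (n < m i.+1)) (t i).

Definition extracted (A : finType) (t s : nat -> vword A) : Prop :=
  forall l, extracted_fin t l s.

Definition large (A : finType) (E : word A -> Prop) (s : nat -> vword A) : Prop :=
  forall w : nat -> vword A, extracted w s ->
    exists z, E z /\ cspan w predT z.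

(* E_F for nonempty F *)
Definition shiftset (A : finType) (E : word A -> Prop) (F : word A -> Prop) : word A -> Prop :=
  fun z => forall w, F w -> E (w ++ z).

(* Main.v *)
Require Import Defs.
From mathcomp Require Import all_boot.
From mathcomp Require Import boolp classical_sets filter.
From Stdlib Require Import ClassicalEpsilon.
Set Implicit Arguments. Unset Strict Implicit. Unset Printing Implicit Defensive.


Section UF.
Variable X : Type.
Variable x0 : X.

Record uf := UF {
  mem : (X -> Prop) -> Prop;
  memT : mem (fun _ => True);
  memI : forall B C, mem B -> mem C -> mem (fun x => B x /\ C x);
  memS : forall B C : X -> Prop, (forall x, B x -> C x) -> mem B -> mem C;
  memU : forall B, mem B \/ mem (fun x => ~ B x);
  mem0 : ~ mem (fun _ => False) }.

Lemma uf_ext p q : (forall B, mem p B <-> mem q B) -> p = q.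
Proof.
case: p => m1 T1 I1 S1 U1 Z1; case: q => m2 T2 I2 S2 U2 Z2 /= H.
have E : m1 = m2 by apply: funext => B; apply: propext.
subst m2; f_equal; apply: Prop_irrelevance.
Qed.

Lemma mem_ex p B : mem p B -> exists x, B x.
Proof.
move=> pB; apply: contrapT => nex; apply: (@mem0 p).
by apply: memS pB => x Bx; apply: nex; exists x.
Qed.

Lemma memNN p B : mem p B -> ~ mem p (fun x => ~ B x).
Proof.
by move=> pB pnB; apply: (@mem0 p); apply: memS (memI pB pnB) => x [].
Qed.

Lemma memN p B : ~ mem p B -> mem p (fun x => ~ B x).
Proof. by case: (memU p B). Qed.

Lemma uf_sub p q : (forall B, mem p B -> mem q B) -> p = q.
Proof.
move=> H; apply: uf_ext => B; split; first exact: H.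
move=> qB; apply: contrapT => npB.
exact: (memNN qB (H _ (memN npB))).
Qed.

Lemma mem_all (I : finType) p (B : I -> X -> Prop) :
  (forall i, mem p (B i)) -> mem p (fun x => forall i, B i x).
Proof.
move=> H.
have : forall s : seq I, mem p (fun x => forall i, i \in s -> B i x).
  elim=> [|i s IH]; first by apply: memS (memT p).
  apply: memS (memI (H i) IH) => x [Bi Bs] j; rewrite inE => /orP[/eqP->//|].
  exact: Bs.
move=> /(_ (enum I)); apply: memS => x Hx i; apply: Hx; by rewrite mem_enum.
Qed.

Lemma uf_exists (G : (X -> Prop) -> Prop) :
  (forall B C, G B -> G C -> exists D, G D /\ forall x, D x -> B x /\ C x) ->
  (forall B, G B -> exists x, B x) ->
  exists p : uf, forall B, G B -> mem p B.
Proof.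
move=> GI Gne.
pose F := fun C : set X => C = setT \/ exists B, G B /\ (forall x, B x -> C x).
have FF : Filter F.
  split.
  - by left.
  - move=> P Q [PT|[B [GB BP]]] [QT|[C [GC CQ]]].
    + by left; rewrite PT QT setIT.
    + by right; exists C; split => // x Cx; rewrite PT; split => //; exact: CQ.
    + by right; exists B; split => // x Bx; rewrite QT; split => //; exact: BP.
    + have [D [GD DBC]] := GI _ _ GB GC.
      right; exists D; split => // x /DBC [Bx Cx]; split; [exact: BP|exact: CQ].
  - move=> P Q PQ [PT|[B [GB BP]]].
    + have -> : Q = setT by apply/seteqP; split => // x _; apply: PQ; rewrite PT.
      by left.
    + by right; exists B; split => // x /BP; apply: PQ.
have PF : ProperFilter F.
  apply: Build_ProperFilter_ex => // P [PT|[B [GB BP]]]; first by exists x0; rewrite PT.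
  by have [x Bx] := Gne _ GB; exists x; apply: BP.
have [U [UU FU]] := ultraFilterLemma PF.
have UF_ : Filter U by case: UU => -[].
have UP : ~ U set0 by case: UU => -[].
have uT : U (fun _ => True) by exact: (@filterT _ _ UF_).
have uI : forall B C, U B -> U C -> U (fun x => B x /\ C x).
  by move=> B C; exact: (@filterI _ _ UF_).
have uS : forall B C : X -> Prop, (forall x, B x -> C x) -> U B -> U C.
  by move=> B C BC; exact: (@filterS _ _ UF_).
have uU : forall B, U B \/ U (fun x => ~ B x).
  by move=> B; exact: (@in_ultra_setVsetC _ _ B UU).
have u0 : ~ U (fun _ => False) by exact: UP.
exists (UF uT uI uS uU u0) => B GB /=; apply: FU; right; exists B; split => //.
Qed.

Variable op : X -> X -> X.
Hypothesis opA : associative op.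

Definition lq (x : X) (B : X -> Prop) := fun y => B (op x y).
Definition Phi (q : uf) (B : X -> Prop) := fun x => mem q (lq x B).

Section Mul.
Variables p q : uf.
Let m B := mem p (Phi q B).
Let mT : m (fun _ => True).
Proof. by apply: memS (memT p) => x _; exact: memT. Qed.
Let mI B C : m B -> m C -> m (fun x => B x /\ C x).
Proof. by move=> HB HC; apply: memS (memI HB HC) => x [] qB qC; exact: memI. Qed.
Let mS (B C : X -> Prop) : (forall x, B x -> C x) -> m B -> m C.
Proof. by move=> BC; apply: memS => x; apply: memS => y; exact: BC. Qed.
Let mU B : m B \/ m (fun x => ~ B x).
Proof.
case: (memU p (Phi q B)) => H; [by left|right].
by apply: memS H => x nqB; exact: memN.
Qed.
Let m0 : ~ m (fun _ => False).
Proof. by move=> /mem_ex [x /mem0]. Qed.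
Definition mul := UF mT mI mS mU m0.
End Mul.

Lemma memM p q B : mem (mul p q) B = mem p (Phi q B).
Proof. by []. Qed.

Lemma mulA p q r : mul (mul p q) r = mul p (mul q r).
Proof.
apply: uf_ext => B; rewrite !memM.
suff -> : Phi q (Phi r B) = Phi (mul q r) B by [].
apply: funext => x; rewrite /Phi memM /lq.
congr (mem q); apply: funext => y; congr (mem r); apply: funext => z.
by rewrite -opA.
Qed.

Definition closed (K : uf -> Prop) :=
  forall p, (forall B, (forall r, K r -> mem r B) -> mem p B) -> K p.

Lemma closed_bigcap (KK : (uf -> Prop) -> Prop) :
  (forall K, KK K -> closed K) -> closed (fun p => forall K, KK K -> K p).
Proof.
move=> Hc p H K KK_K; apply: (Hc _ KK_K) => B HB; apply: H => r Hr.
exact: HB (Hr _ KK_K).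
Qed.

Lemma closedI K1 K2 : closed K1 -> closed K2 -> closed (fun p => K1 p /\ K2 p).
Proof.
move=> c1 c2 p H; split.
- by apply: c1 => B HB; apply: H => r [] /HB.
- by apply: c2 => B HB; apply: H => r [] _ /HB.
Qed.

Definition image_r (K : uf -> Prop) (x : uf) := fun u => exists2 r, K r & u = mul r x.

Lemma closed_image_r K x : closed K -> closed (image_r K x).
Proof.
move=> cK u H.
pose G := fun C : X -> Prop => exists B D, mem u B /\ (forall r, K r -> mem r D)
   /\ C = (fun y => D y /\ Phi x B y).
have [r Hr] : exists r : uf, forall C, G C -> mem r C.
  apply: uf_exists.
  - move=> _ _ [B1 [D1 [uB1 [KD1 ->]]]] [B2 [D2 [uB2 [KD2 ->]]]].
    exists (fun y => (D1 y /\ D2 y) /\ Phi x (fun z => B1 z /\ B2 z) y); split.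
      exists (fun z => B1 z /\ B2 z), (fun y => D1 y /\ D2 y); split; first exact: memI.
      by split => // r Kr; apply: memI; [exact: KD1|exact: KD2].
    move=> y [[D1y D2y] Hy]; split; split => //.
      by apply: memS Hy => z [].
    by apply: memS Hy => z [].
  - move=> _ [B [D [uB [KD ->]]]]; apply: contrapT => nex.
    have : mem u (fun z => ~ B z).
      apply: H => _ [r Kr ->]; rewrite memM.
      have rD := KD _ Kr.
      have nP : ~ mem r (Phi x B).
        move=> rP; have [y Hy] := mem_ex (memI rD rP); apply: nex; by exists y.
      by apply: memS (memN nP) => y nxB; exact: memN.
    exact: memNN uB.
exists r.
  apply: cK => D KD.
  have HG1 : G (fun y => D y /\ Phi x (fun _ => True) y).
    by exists (fun _ => True), D; split; [exact: memT|split].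
  by apply: memS (Hr _ HG1) => y [].
apply: uf_sub => B uB; rewrite memM.
have HG1 : G (fun y => True /\ Phi x B y).
  exists B, (fun _ => True); split => //; split => // r' _; exact: memT.
by apply: memS (Hr _ HG1) => y [].
Qed.

Lemma chain_inter (KK : (uf -> Prop) -> Prop) :
  (forall K, KK K -> closed K /\ exists p, K p) ->
  (forall K1 K2, KK K1 -> KK K2 -> (forall p, K1 p -> K2 p) \/ (forall p, K2 p -> K1 p)) ->
  exists p, forall K, KK K -> K p.
Proof.
move=> Hc Hch.
pose G := fun B : X -> Prop => exists K, KK K /\ forall r, K r -> mem r B.
have [p Hp] : exists p : uf, forall B, G B -> mem p B.
  apply: uf_exists.
  - move=> B1 B2 [K1 [KK1 H1]] [K2 [KK2 H2]].
    exists (fun x => B1 x /\ B2 x); split => //.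
    case: (Hch _ _ KK1 KK2) => sub.
    + by exists K1; split => // r Kr; apply: memI; [exact: H1|apply: H2; exact: sub].
    + by exists K2; split => // r Kr; apply: memI; [apply: H1; exact: sub|exact: H2].
  - move=> B [K [KKK HK]]; have [_ [r Kr]] := Hc _ KKK; exact: mem_ex (HK _ Kr).
exists p => K KKK; have [cK _] := Hc _ KKK; apply: cK => B HB.
by apply: Hp; exists K.
Qed.

End UF.


Section SG.
Variable X : Type.
Variable x0 : X.
Variable op : X -> X -> X.
Hypothesis opA : associative op.

Local Notation uf := (uf X).
Local Notation mul := (@mul X op).
Let mA : forall p q r, mul (mul p q) r = mul p (mul q r) := mulA opA.

Lemma minimal_exists (Q : (uf -> Prop) -> Prop) K0 :
  Q K0 -> (forall K, Q K -> closed K /\ exists p, K p) ->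
  (forall KK, (forall K, KK K -> Q K) -> (exists K, KK K) ->
     (exists p, forall K, KK K -> K p) -> Q (fun p => forall K, KK K -> K p)) ->
  exists M, [/\ Q M, (forall p, M p -> K0 p) &
    forall M', Q M' -> (forall p, M' p -> M p) -> forall p, M p -> M' p].
Proof.
move=> QK0 Qc Qcap.
pose T := {K : uf -> Prop | Q K /\ (forall p, K p -> K0 p)}.
pose R := fun a b : T => `[< forall p, sval b p -> sval a p >].
have [| | | |t Ht] := @Zorn T R.
- by move=> a; apply/asboolP.
- by move=> a b c /asboolP ab /asboolP bc; apply/asboolP => p /bc /ab.
- move=> [a Ha] [b Hb] /asboolP /= ab /asboolP /= ba.
  have E : a = b by apply: funext => p; apply: propext; split; [exact: ba|exact: ab].
  subst b; congr exist; exact: Prop_irrelevance.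
- move=> A Atot.
  case: (pselect (exists a, A a)) => [[a0 Aa0]|nA]; last first.
    exists (exist _ K0 (conj QK0 (fun p (h : K0 p) => h))) => s As.
    by exfalso; apply: nA; exists s.
  pose KK := fun K => exists a, A a /\ sval a = K.
  have KKQ : forall K, KK K -> Q K by move=> K [a [_ <-]]; case: (svalP a).
  have [p Hp] : exists p, forall K, KK K -> K p.
    apply: chain_inter => //.
    - by move=> K /KKQ /Qc.
    - move=> K1 K2 [a [Aa <-]] [b [Ab <-]].
      by case: (Atot _ _ Aa Ab) => /asboolP H; [right|left].
  have QI := Qcap KK KKQ (ex_intro _ _ (ex_intro _ a0 (conj Aa0 erefl))) (ex_intro _ p Hp).
  have sub : forall q, (fun p => forall K, KK K -> K p) q -> K0 q.
    by move=> q /(_ (sval a0) (ex_intro _ a0 (conj Aa0 erefl))); case: (svalP a0) => _; apply.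
  exists (exist (fun K => Q K /\ (forall p, K p -> K0 p)) (fun p => forall K, KK K -> K p) (conj QI sub)) => s As; apply/asboolP => q /= Hq.
  by apply: Hq; exists s.
- exists (sval t); case: (svalP t) => Qt t0; split => // M' QM' M'M q Mq.
  have M'0 : forall p, M' p -> K0 p by move=> p /M'M /t0.
  have E : (exist (fun K => Q K /\ (forall p, K p -> K0 p)) M' (conj QM' M'0) : T) = t.
    by apply: Ht; apply/asboolP.
  by rewrite -E in Mq.
Qed.

Definition subsg (T : uf -> Prop) := forall p q, T p -> T q -> T (mul p q).
Definition lideal (T L : uf -> Prop) := forall t l, T t -> L l -> L (mul t l).

Lemma image_sub T K x : subsg T -> T x -> (forall p, K p -> T p) ->
  forall u, image_r op K x u -> T u.
Proof. by move=> sT Tx KT u [r /KT Tr ->]; exact: sT. Qed.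

Lemma closed_fix p : closed (fun r : uf => mul r p = p).
Proof.
move=> u H; symmetry; apply: uf_sub => B pB.
rewrite memM; apply: H => r rp.
by move: pB; rewrite -{1}rp memM.
Qed.

Lemma ellis T : closed T -> (exists p, T p) -> subsg T ->
  exists p, T p /\ mul p p = p.
Proof.
move=> cT neT sT.
pose Q := fun K => [/\ closed K, (exists p, K p), subsg K & forall p, K p -> T p].
have [|K [cK [p Kp] sK KT]|KK HKK [K0 KK0] [p Hp]|M [[cM [p Mp] sM MT] _ Mmin]]
  := @minimal_exists Q T.
- by split.
- by split => //; exists p.
- split.
  + by apply: closed_bigcap => K /HKK [].
  + by exists p.
  + by move=> a b Ha Hb K KKK; have [_ _ sK _] := HKK _ KKK; apply: sK; [exact: Ha|exact: Hb].
  + by move=> q Hq; have [_ _ _ KT] := HKK _ KK0; apply: KT; exact: Hq.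
pose MP := image_r op M p.
have QMp : Q MP.
  split.
  - exact: (@closed_image_r X x0 op M p cM).
  - by exists (mul p p), p.
  - move=> u1 u2 [r1 Mr1 E1] [r2 Mr2 E2]; exists (mul (mul r1 p) r2).
      by apply: (sM) => //; exact: (sM).
    by rewrite E1 E2 !mA.
  - by move=> u [r Mr ->]; apply: MT; exact: sM.
have [r Mr pE] := Mmin _ QMp (fun u (h : MP u) => let: ex_intro2 r Mr E := h in
    eq_ind_r M (sM _ _ Mr Mp) E) _ Mp.
pose Z := fun r => M r /\ mul r p = p.
have QZ : Q Z.
  split.
  - apply: closedI => //; exact: closed_fix.
  - by exists r; split.
  - by move=> a b [Ma Ea] [Mb Eb]; split; [exact: sM|rewrite mA Eb Ea].
  - by move=> u [/MT].
have [_ pp] := Mmin _ QZ (fun u (h : Z u) => proj1 h) _ Mp.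
by exists p; split; [exact: MT|].
Qed.

Lemma min_lideal T K : closed T -> subsg T -> closed K -> (exists p, K p) ->
  lideal T K -> (forall p, K p -> T p) ->
  exists L, [/\ closed L, (exists p, L p), lideal T L, (forall p, L p -> K p) &
    forall L', closed L' -> (exists p, L' p) -> lideal T L' ->
      (forall p, L' p -> L p) -> forall p, L p -> L' p].
Proof.
move=> cT sT cK neK lK KT.
pose Q := fun L => [/\ closed L, (exists p, L p), lideal T L & forall p, L p -> T p].
have [|L [cL [p Lp] lL LT]|KK HKK [K0 KK0] [p Hp]|L [[cL neL lL LT] LK Lmin]]
  := @minimal_exists Q K.
- by split.
- by split => //; exists p.
- split.
  + by apply: closed_bigcap => L /HKK [].
  + by exists p.
  + by move=> t l Tt Hl L KKL; have [_ _ lL _] := HKK _ KKL; apply: lL => //; exact: Hl.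
  + by move=> q Hq; have [_ _ _ LT] := HKK _ KK0; apply: LT; exact: Hq.
exists L; split => // L' cL' neL' lL' L'L; apply: Lmin => //; split => //.
by move=> q /L'L /LT.
Qed.

Lemma min_lideal_gen T L x : closed T -> subsg T -> closed L -> lideal T L ->
  (forall p, L p -> T p) ->
  (forall L', closed L' -> (exists p, L' p) -> lideal T L' ->
      (forall p, L' p -> L p) -> forall p, L p -> L' p) ->
  L x -> forall p, L p -> exists2 t, T t & p = mul t x.
Proof.
move=> cT sT cL lL LT Lmin Lx.
apply: (Lmin (image_r op T x)).
- exact: (@closed_image_r X x0 op T x cT).
- by exists (mul x x), x => //; exact: LT.
- by move=> t _ Tt [r Tr ->]; exists (mul t r); [exact: sT|rewrite mA].
- by move=> _ [t Tt ->]; exact: lL.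
Qed.

End SG.


Section Conc.
Variable A : finType.
Variable a0 : A.

Definition lett := (nat * option A)%type.
Local Notation X := (seq lett).
Local Notation uf := (uf X).
Local Notation mul := (@mul X cat).

Definition Ok k (x : X) : Prop :=
  [&& x != [::], sorted ltn (map fst x) & all (fun c => k <= c.1) x].
Definition Wc (x : X) : Prop := all (fun c => c.2 != None) x.
Definition Vc (x : X) : Prop := has (fun c => c.2 == None) x.
Definition sig (a : A) (c : lett) : lett := (c.1, Some (odflt a c.2)).
Definition bnd (x : X) := foldr (fun c m => maxn c.1.+1 m) 0 x.

Lemma bnd_lt x c : c \in x -> c.1 < bnd x.
Proof.
elim: x => //= d x IH; rewrite inE => /orP[/eqP->|/IH]; rewrite leq_max.
  by rewrite ltnSn.
by move=> ->; rewrite orbT.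
Qed.

Lemma Ok_cat k x y : Ok k x -> Ok (bnd x) y -> Ok k (x ++ y).
Proof.
case/and3P => xn xs xk /and3P[yn ys yk]; apply/and3P; split.
- by rewrite -size_eq0 size_cat addn_eq0 negb_and size_eq0 xn.
- rewrite map_cat sorted_pairwise ?pairwise_cat; last exact: ltn_trans.
  rewrite -!sorted_pairwise ?xs ?ys ?andbT; try exact: ltn_trans.
  apply/allrelP => i j /mapP[c cx ->] /mapP[d dy ->].
  apply: leq_trans (bnd_lt cx) _; exact: (allP yk).
- rewrite all_cat xk /=; apply/allP => d dy.
  have [c cx] : exists c, c \in x.
    by case: (x) xn => [|c s] //; exists c; rewrite mem_head.
  apply: leq_trans (allP xk c cx) _; apply: ltnW; apply: leq_trans (bnd_lt cx) _.
  exact: (allP yk).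
Qed.

Lemma Ok_mono j k x : j <= k -> Ok k x -> Ok j x.
Proof.
move=> jk /and3P[xn xs xk]; apply/and3P; split => //.
by apply/allP => c /(allP xk); apply: leq_trans.
Qed.

Let x0 : X := [::].
Let catA' : associative (@cat lett) := @catA lett.
Let mA := mulA catA'.

Definition dl (p : uf) := forall k, mem p (Ok k).
Definition dW p := dl p /\ mem p Wc.
Definition dV p := dl p /\ mem p Vc.

Lemma closed_dl : closed dl.
Proof. by move=> p H k; apply: H => r; apply. Qed.
Lemma closed_dW : closed dW.
Proof.
apply: closedI; first exact: closed_dl.
by move=> p H; apply: H => r.
Qed.

Lemma subsg_dl : subsg cat dl.
Proof.
move=> p q dp dq k; rewrite memM; apply: memS (dp k) => x xk.
by apply: memS (dq (bnd x)) => y; apply: Ok_cat.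
Qed.

Lemma subsg_dW : subsg cat dW.
Proof.
move=> p q [dp wp] [dq wq]; split; first exact: subsg_dl.
rewrite memM; apply: memS wp => x wx; apply: memS wq => y wy.
by rewrite /lq /Wc all_cat; apply/andP.
Qed.

Lemma VcL u t : mem u Vc -> mem (mul u t) Vc.
Proof.
move=> uV; rewrite memM; apply: memS uV => x vx; apply: memS (memT t) => y _.
by rewrite /lq /Vc has_cat; apply/orP; left.
Qed.

Lemma VcR u t : mem u Vc -> mem (mul t u) Vc.
Proof.
move=> uV; rewrite memM; apply: memS (memT t) => x _; apply: memS uV => y vy.
by rewrite /lq /Vc has_cat; apply/orP; right.
Qed.

Lemma ne_dV : exists p, dV p.
Proof.
have [p Hp] : exists p : uf, forall B, (exists k, B = fun x => Ok k x /\ Vc x) -> mem p B.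
  apply: (@uf_exists X x0).
  - move=> _ _ [k1 ->] [k2 ->]; exists (fun x => Ok (maxn k1 k2) x /\ Vc x); split.
    by exists (maxn k1 k2).
  move=> x [xk xv]; split; split => //; apply: Ok_mono xk.
    exact: leq_maxl.
  exact: leq_maxr.
- move=> _ [k ->]; exists [:: (k, None)]; split => //.
  by rewrite /Ok /= leqnn.
exists p; split.
- by move=> k; apply: memS (Hp _ (ex_intro _ k erefl)) => x [].
- by apply: memS (Hp _ (ex_intro _ 0 erefl)) => x [].
Qed.

Lemma ne_dW : exists p, dW p.
Proof.
have [p Hp] : exists p : uf, forall B, (exists k, B = fun x => Ok k x /\ Wc x) -> mem p B.
  apply: (@uf_exists X x0).
  - move=> _ _ [k1 ->] [k2 ->]; exists (fun x => Ok (maxn k1 k2) x /\ Wc x); split.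
    by exists (maxn k1 k2).
  move=> x [xk xv]; split; split => //; apply: Ok_mono xk.
    exact: leq_maxl.
  exact: leq_maxr.
- move=> _ [k ->]; exists [:: (k, Some a0)]; split => //.
  by rewrite /Ok /= leqnn.
exists p; split.
- by move=> k; apply: memS (Hp _ (ex_intro _ k erefl)) => x [].
- by apply: memS (Hp _ (ex_intro _ 0 erefl)) => x [].
Qed.

Section Smap.
Variables (a : A) (p : uf).
Let m B := mem p (fun x => B (map (sig a) x)).
Let mT : m (fun _ => True). Proof. exact: memT. Qed.
Let mI B C : m B -> m C -> m (fun x => B x /\ C x). Proof. exact: memI. Qed.
Let mS (B C : X -> Prop) : (forall x, B x -> C x) -> m B -> m C.
Proof. by move=> BC; apply: memS => x; exact: BC. Qed.
Let mU B : m B \/ m (fun x => ~ B x). Proof. exact: memU. Qed.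
Let m0 : ~ m (fun _ => False). Proof. exact: mem0. Qed.
Definition smap := UF mT mI mS mU m0.
End Smap.

Lemma memSm a p B : mem (smap a p) B = mem p (fun x => B (map (sig a) x)).
Proof. by []. Qed.

Lemma smap_mul a p q : smap a (mul p q) = mul (smap a p) (smap a q).
Proof.
apply: uf_ext => B; rewrite memSm !memM.
suff -> : Phi cat q (fun x => B (map (sig a) x)) =
          (fun x => Phi cat (smap a q) B (map (sig a) x)) by [].
apply: funext => x; rewrite /Phi memSm /lq.
by congr (mem q); apply: funext => y; rewrite map_cat.
Qed.

Lemma smap_dl a p : dl p -> dl (smap a p).
Proof.
move=> dp k; rewrite memSm; apply: memS (dp k) => x.
case/and3P => xn xs xk; apply/and3P; split.
- by rewrite -size_eq0 size_map size_eq0.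
- suff -> : map fst (map (sig a) x) = map fst x by [].
  by rewrite -map_comp; apply: eq_map.
- by rewrite all_map.
Qed.

Lemma smap_W a p : mem (smap a p) Wc.
Proof. by rewrite memSm; apply: memS (memT p) => x _; rewrite /Wc all_map; apply/allP. Qed.

Lemma smap_id a p : mem p Wc -> smap a p = p.
Proof.
move=> wp; symmetry; apply: uf_sub => B pB; rewrite memSm.
apply: memS (memI pB wp) => x [Bx wx].
suff -> : map (sig a) x = x by [].
rewrite -[RHS]map_id; apply/eq_in_map => c /(allP wx).
by case: c => n [b|].
Qed.

Theorem good_uf : exists p : uf, mul p p = p /\
  forall B k, mem p B -> exists x, [/\ Ok k x, Vc x & forall a, B (map (sig a) x)].
Proof.
have [LW [cLW neLW lLW LWW LWmin]] := @min_lideal X x0 cat dW dW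
  closed_dW subsg_dW closed_dW ne_dW (fun t l Tt Tl => subsg_dW Tt Tl) (fun _ h => h).
have [p [LWp pp]] := @ellis X x0 cat catA' LW cLW neLW
  (fun a b Ha Hb => lLW _ _ (LWW _ Ha) Hb).
have dWp := LWW _ LWp.
have pmin : forall e, dW e -> mul e e = e -> mul e p = e -> mul p e = e -> e = p.
  move=> e We ee ep pe.
  have LWe : LW e by rewrite -ep; exact: lLW.
  have [t Wt pE] := @min_lideal_gen X x0 cat catA' dW LW e closed_dW subsg_dW cLW lLW
    LWW LWmin LWe p LWp.
  have : mul p e = p by rewrite pE mA ee.
  by rewrite pe.
have dp := proj1 dWp.
have [L [cL neL lL LK Lmin]] := @min_lideal X x0 cat dl (image_r cat dl p)
  closed_dl subsg_dl (@closed_image_r X x0 cat dl p closed_dl)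
  (ex_intro _ (mul p p) (ex_intro2 _ _ p dp erefl))
  (fun t l Tt '(ex_intro2 r Tr E) => ex_intro2 _ _ (mul t r) (subsg_dl Tt Tr)
      (eq_trans (f_equal (mul t) E) (esym (mA _ _ _))))
  (fun u '(ex_intro2 r Tr E) => eq_ind_r dl (subsg_dl Tr dp) E).
have Ldl : forall u, L u -> dl u.
  by move=> u /LK [r Tr ->]; exact: subsg_dl.
have [r [Lr rr]] := @ellis X x0 cat catA' L cL neL (fun a b Ha Hb => lL _ _ (Ldl _ Ha) Hb).
have rp : mul r p = r.
  by have [t _ ->] := LK _ Lr; rewrite mA pp.
pose q := mul p r.
have qq : mul q q = q by rewrite /q mA -(mA r p r) rp rr.
have qp : mul q p = q by rewrite /q mA rp.
have pq : mul p q = q by rewrite /q -mA pp.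
have Lq : L q by apply: lL.
have [v [dv vV]] := ne_dV.
have Lvq : L (mul v q) by apply: lL.
have [t dt qE] := @min_lideal_gen X x0 cat catA' dl L (mul v q) closed_dl subsg_dl cL lL
    Ldl Lmin Lvq q Lq.
have qV : mem q Vc by rewrite qE -mA; apply: VcL; apply: VcR.
have sq : forall a, smap a q = p.
  move=> a; apply: pmin.
  - split; [apply: smap_dl; exact: Ldl|exact: smap_W].
  - by rewrite -smap_mul qq.
  - by rewrite -(smap_id a (proj2 dWp)) -smap_mul qp.
  - by rewrite -(smap_id a (proj2 dWp)) -smap_mul pq.
exists p; split => // B k pB.
have dq := Ldl _ Lq.
have : mem q (fun x => (Ok k x /\ Vc x) /\ forall a, B (map (sig a) x)).
  apply: memI; first exact: memI.
  apply: mem_all => a; rewrite -memSm sq; exact: pB.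
by move=> /mem_ex [x [[xk xv] Hx]]; exists x.
Qed.

End Conc.


Section Rec.
Variable A : finType.
Local Notation X := (seq (lett A)).
Local Notation uf := (uf X).
Local Notation mul := (@mul X cat).

Definition comb (L : nat -> X) (ls : seq (nat * A)) : X :=
  flatten [seq map (sig c.2) (L c.1) | c <- ls].

Variable p : uf.
Hypothesis pp : mul p p = p.
Hypothesis star : forall B k, mem p B ->
  exists x, [/\ Ok k x, Vc x & forall a, B (map (sig a) x)].

Definition stars (B : X -> Prop) := fun x => B x /\ mem p (lq cat x B).

Lemma stars_mem B : mem p B -> mem p (stars B).
Proof.
move=> pB; have : mem (mul p p) B by rewrite pp.
rewrite memM => H; exact: memI pB H.
Qed.

Lemma stars_lq B x : stars B x -> mem p (lq cat x (stars B)).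
Proof.
move=> [Bx px]; have := stars_mem px; apply: memS => y [Bxy pxy]; split => //.
by move: pxy; rewrite /lq; apply: memS => z; rewrite catA.
Qed.

Definition choose (D : X -> Prop) (k : nat) : X :=
  proj1_sig (constructive_indefinite_description
   (fun x => mem p D -> [/\ Ok k x, Vc x & forall a, D (map (sig a) x)])
   (match pselect (mem p D) with
    | left h => let: ex_intro x hx := star k h in ex_intro _ x (fun _ => hx)
    | right h => ex_intro _ [::] (fun h' => False_ind _ (h h'))
    end)).

Lemma chooseP D k : mem p D -> [/\ Ok k (choose D k), Vc (choose D k) &
   forall a, D (map (sig a) (choose D k))].
Proof. rewrite /choose; case: constructive_indefinite_description => x hx /=; exact: hx. Qed.

Variable B0 : X -> Prop.

Fixpoint stp (n : nat) : (X -> Prop) * nat :=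
  match n with
  | 0 => (stars B0, 0)
  | n'.+1 => let: (D, k) := stp n' in let x := choose D k in
      (stars (fun y => D y /\ forall a, D (map (sig a) x ++ y)), bnd x)
  end.

Definition Dn n := (stp n).1.
Definition bn n := (stp n).2.
Definition Ln n := choose (Dn n) (bn n).

Lemma stp_S n : stp n.+1 =
  (stars (fun y => Dn n y /\ forall a, Dn n (map (sig a) (Ln n) ++ y)), bnd (Ln n)).
Proof. by rewrite /= /Ln /Dn /bn; case: (stp n). Qed.

Hypothesis pB0 : mem p B0.

Lemma Dn_inv n : mem p (Dn n) /\ exists C, Dn n = stars C.
Proof.
elim: n => [|n [pD [C DC]]].
  by split; [exact: stars_mem|exists B0].
rewrite /Dn stp_S /=; split; last by eexists.
apply: stars_mem; apply: memI => //; apply: mem_all => a.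
have [Ok_ V_ H] := chooseP (bn n) pD.
have := H a; rewrite -/(Ln n) DC => /stars_lq; rewrite -DC.
by apply: memS.
Qed.

Lemma LnP n : [/\ Ok (bn n) (Ln n), Vc (Ln n) & forall a, Dn n (map (sig a) (Ln n))].
Proof. exact: chooseP (proj1 (Dn_inv n)). Qed.

Lemma Dn_S n y : Dn n.+1 y -> Dn n y /\ forall a, Dn n (map (sig a) (Ln n) ++ y).
Proof. by rewrite /Dn stp_S /= => -[]. Qed.

Lemma Dn_anti m n y : m <= n -> Dn n y -> Dn m y.
Proof.
move=> /subnK <-; elim: (n - m) y => //= d IH y /Dn_S [/IH].
by [].
Qed.

Lemma comb_D ls n : ls != [::] -> sorted ltn (map fst ls) ->
  all (fun c => n <= c.1) ls -> Dn n (comb Ln ls).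
Proof.
elim: ls n => // [[j a] rest] IH n _ /= srt /andP[nj allr].
rewrite /comb /= -/(comb Ln rest).
case: rest IH srt allr => [|c rest] IH srt allr.
  rewrite cats0; apply: Dn_anti nj _; by case: (LnP j).
have allj : all (fun d => j.+1 <= d.1) (c :: rest).
  have : pairwise ltn (j :: map fst (c :: rest)) by rewrite -(sorted_pairwise ltn_trans).
  by rewrite pairwise_cons all_map => /andP[].
have srt' : sorted ltn (map fst (c :: rest)) := path_sorted srt.
have := IH j.+1 isT srt' allj => /Dn_S [_ /(_ a)].
by apply: Dn_anti.
Qed.

End Rec.

Theorem recursion (A : finType) (p : uf (seq (lett A))) :
  mul cat p p = p ->
  (forall B k, mem p B -> exists x, [/\ Ok k x, Vc x & forall a, B (map (sig a) x)]) ->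
  forall B0, mem p B0 ->
  exists (L : nat -> seq (lett A)) (b : nat -> nat), b 0 = 0 /\
    (forall n, [/\ Ok (b n) (L n), Vc (L n), b n < b n.+1 &
                  all (fun c => c.1 < b n.+1) (L n)]) /\
    forall ls, ls != [::] -> sorted ltn (map fst ls) -> B0 (comb L ls).
Proof.
move=> pp star B0 pB0.
exists (Ln star B0), (bn star B0); split => //; split.
  move=> n; have [Okn Vn _] := LnP pp star pB0 n.
  have bS : bn star B0 n.+1 = bnd (Ln star B0 n) by rewrite /bn stp_S.
  have bl : all (fun c => c.1 < bn star B0 n.+1) (Ln star B0 n).
    by rewrite bS; apply/allP => c; apply: bnd_lt.
  split => //.
  case/and3P: Okn => ne _ al.
  have [c cL] : exists c, c \in Ln star B0 n.
    by case: (Ln star B0 n) ne => [|c s] //; exists c; rewrite mem_head.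
  by apply: leq_ltn_trans (allP al c cL) (allP bl c cL).
move=> ls ne srt.
have := comb_D pp star pB0 (n:=0) ne srt.
have -> : all (fun c => 0 <= c.1) ls by apply/allP.
by move=> /(_ isT) [].
Qed.


Section Words.
Variable A : finType.
Variable s : nat -> vword A.
Variable a0 : A.

Definition wordL (x : seq (lett A)) : vword A :=
  flatten [seq subst_v (s c.1) c.2 | c <- x].
Definition ev (x : seq (lett A)) : word A :=
  flatten [seq subst_c (s c.1) (odflt a0 c.2) | c <- x].

Lemma subst_cv (v : vword A) o a : subst_c (subst_v v o) a = subst_c v (odflt a o).
Proof. by rewrite /subst_c /subst_v -map_comp; apply: eq_map => -[b|]. Qed.

Lemma ev_word x a : subst_c (wordL x) a = ev (map (sig a) x).
Proof.
rewrite /subst_c /wordL /ev map_flatten -!map_comp; congr flatten.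
by apply: eq_map => c /=; rewrite -/(subst_c _ _) subst_cv.
Qed.

Lemma ev_cat x y : ev (x ++ y) = ev x ++ ev y.
Proof. by rewrite /ev map_cat flatten_cat. Qed.

Lemma ev_comb (L : nat -> seq (lett A)) ls :
  flatten [seq subst_c (wordL (L c.1)) c.2 | c <- ls] = ev (comb L ls).
Proof.
elim: ls => [|c ls IH] //=; rewrite /comb /= ev_cat -/(comb L ls) -IH.
by rewrite ev_word.
Qed.

Lemma word_vword x : (forall n, is_vword (s n)) -> Vc x -> is_vword (wordL x).
Proof.
move=> hs /hasP [c cx /eqP c2]; apply/flattenP.
exists (subst_v (s c.1) c.2); first by apply: (map_f (fun c => subst_v (s c.1) c.2)).
rewrite c2 /subst_v.
have -> : map (fun d => if d is Some b then Some b else None) (s c.1) = s c.1.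
  by rewrite -[RHS]map_id; apply: eq_map => -[].
exact: hs.
Qed.

End Words.

Theorem lemma2p9 (A : finType) (hA : 0 < #|A|) (E : word A -> Prop)
    (s : nat -> vword A) (hs : forall n, is_vword (s n)) (hlarge : large E s) :
  exists m : nat, 1 <= m /\
    exists w : vword A, vspan s (fun n => n < m) w /\
      exists t : nat -> vword A,
        (forall n, is_vword (t n)) /\
        extracted t (fun n => s (m + n)) /\
        large (fun z => E z /\
                 shiftset E (fun u => exists a : A, u = subst_c w a) z) t.
Proof.
have [a0 _] := card_gt0P hA.
have [p [pp star]] := good_uf a0.
pose Bp := fun x => E (ev s a0 x).
case: (memU p Bp) => HB; last first.
  have [L [b [b0 [Lb comb_ok]]]] := recursion pp star HB.
  exfalso.
  have ext : extracted (fun n => wordL s (L n)) s.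
    move=> l; exists b; split => // i _.
    have [Ok_ V_ lt_ al_] := Lb i; split => //.
    case/and3P: Ok_ => ne srt alk.
    exists (L i); split => //.
    rewrite all_map; apply/allP => c cL /=.
    by rewrite (allP alk c cL) (allP al_ c cL).
  have [z [Ez [ls [ne srt _ zE]]]] := hlarge _ ext.
  by apply: (comb_ok ls ne srt); rewrite /Bp -ev_comb -zE.
have [L [b [b0 [Lb comb_ok]]]] := recursion pp star HB.
have bmono : forall i j, i <= j -> b i <= b j.
  move=> i j /subnK <-; elim: (j - i) => //= d IH.
  by apply: leq_trans IH _; rewrite addSn; have [_ _ /ltnW] := Lb (d + i).
exists (b 1); split.
  by have [_ _ ] := Lb 0; rewrite b0.
exists (wordL s (L 0)); split.
  have [Ok_ V_ lt_ al_] := Lb 0; case/and3P: Ok_ => ne srt alk.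
  by exists (L 0); split => //; rewrite all_map.
exists (fun n => wordL s (L n.+1)); split.
  by move=> n; apply: word_vword => //; have [] := Lb n.+1.
split.
  move=> l; exists (fun i => b i.+1 - b 1); split; first by rewrite subnn.
  move=> i _.
  have [Ok_ V_ lt_ al_] := Lb i.+1; case/and3P: Ok_ => ne srt alk.
  have b1i : b 1 <= b i.+1 by apply: bmono.
  split; first by apply: ltn_sub2r => //; apply: leq_ltn_trans b1i lt_.
  exists (map (fun c => (c.1 - b 1, c.2)) (L i.+1)); split.
  - by rewrite -size_eq0 size_map size_eq0.
  - rewrite -map_comp.
    have -> : map ((fun c => c.1) \o (fun c : lett A => (c.1 - b 1, c.2))) (L i.+1) =
              map (fun n => n - b 1) (map fst (L i.+1)) by rewrite -map_comp.
    apply: (@homo_sorted_in _ _ [pred n | b 1 <= n]) srt.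
      move=> x y; rewrite !inE => hx hy xy; apply: ltn_sub2r (xy); exact: leq_ltn_trans hx xy.
    rewrite all_map; apply/allP => c cL /=; apply: leq_trans b1i _; exact: (allP alk).
  - rewrite -map_comp all_map; apply/allP => c cL /=.
    apply/andP; split; first by rewrite leq_sub2r // (allP alk c cL).
    apply: ltn_sub2r; last exact: (allP al_ c cL).
    exact: leq_ltn_trans b1i lt_.
  - by rewrite has_map.
  - rewrite /wordL -map_comp; congr flatten; apply/eq_in_map => c cL /=.
    by rewrite subnKC //; apply: leq_trans b1i (allP alk c cL).
move=> w' ext'.
have [m'' [_ /(_ 0 (leqnn 0)) [_ [ls' [ne' srt' _ hasN w0E]]]]] := ext' 0.
pose ls := map (fun c => (c.1.+1, odflt a0 c.2)) ls'.
have ne : ls != [::] by rewrite -size_eq0 size_map size_eq0.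
have srt : sorted ltn (map fst ls).
  rewrite -map_comp.
  have -> : map ((fun c => c.1) \o (fun c : nat * option A => (c.1.+1, odflt a0 c.2))) ls' =
            map succn (map fst ls') by rewrite -map_comp.
  by apply: (homo_sorted (f := succn)) srt' => x y.
have zE : subst_c (flatten [seq subst_v (wordL s (L c.1.+1)) c.2 | c <- ls']) a0 =
          ev s a0 (comb L ls).
  rewrite -ev_comb /ls -map_comp {1}/subst_c map_flatten -map_comp; congr flatten.
  apply: eq_map => c /=; rewrite -/(subst_c _ _); exact: subst_cv.
exists (subst_c (w' 0) a0).
split; last first.
  by exists [:: (0, a0)]; split => //=; rewrite cats0.
rewrite w0E.
split; first by rewrite zE; exact: (comb_ok ls ne srt).
move=> u' [a ->]; rewrite zE.
suff : Bp (comb L ((0, a) :: ls)) by rewrite /Bp -ev_comb /= (ev_comb _ a0).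
apply: comb_ok => //.
move: ne srt; rewrite /ls; case: (ls') => // c0 r _ /= ->//.
Qed.
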